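(* Let $0<b\le c$ and let $\mu$ be a real number in $[\lambda_-(b),\lambda_+(b)]$. Then $\zeta_{(\mu,c)}$ is defined, $\int_0^c\zeta_{(\mu,c)}-\int_0^b\zeta_{(\mu,b)}=\mu(c-b)$, and $\zeta_{(\mu,c)}^{-1}(\{\mu\})$ is a closed interval of length at least $c-b$.
   Context: Fix $\kappa_0\in(0,1)$ and $r_0,r_b\in\mathbb{R}$ (the same $r_b$ is used for every value of the right endpoint). Let $F(u)=u/\sqrt{1-u^2}$ for $|u|<1$, $F(u)=+\infty$ for $u\ge1$, $F(u)=-\infty$ for $u\le-1$; $s_0=r_0/\sqrt{1+r_0^2}$, $s_b=r_b/\sqrt{1+r_b^2}$. Define $g_\pm(x)=F(\pm\kappa_0x+s_0)$ and, for each $c>0$, $h^c_\pm(x)=F(\mp\kappa_0(x-c)+s_b)$. $\lambda_+(c)$ is the common real value of $g_+$ and $h^c_+$ at the point where their graphs meet, or $+\infty$ if they do not meet; $\lambda_-(c)$ likewise for $g_-,h^c_-$, or $-\infty$. Assume there exists an absolutely continuous $f:[0,b]\to\mathbb{R}$ with $f'\in L^2$, $|f'|\le\kappa_0(1+f^2)^{3/2}$ a.e., $f(0)=r_0$, $f(b)=r_b$. For $c>0$ and real $\mu\in[\lambda_-(c),\lambda_+(c)]$, $\zeta_{(\mu,c)}:[0,c]\to\mathbb{R}$ is $\zeta_{(\mu,c)}(x)=\operatorname{mid}\big(h^c_-(x),g_-(x),\mu,g_+(x),h^c_+(x)\big)$, the median of five extended reals. *)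

(* Defs.v *)
From Stdlib Require Import Reals Lra List ClassicalEpsilon.
Import ListNotations.
Open Scope R_scope.

Inductive ER : Type := Fin (r : R) | PInf | NInf.

Definition ER_leb (x y : ER) : bool :=
  match x, y with
  | NInf, _ => true
  | _, PInf => true
  | PInf, _ => false
  | _, NInf => false
  | Fin a, Fin b => if Rle_dec a b then true else false
  end.

Definition ER_le (x y : ER) : Prop := ER_leb x y = true.

Fixpoint ER_insert (x : ER) (l : list ER) : list ER :=
  match l with
  | [] => [x]
  | y :: l' => if ER_leb x y then x :: y :: l' else y :: ER_insert x l'
  end.

Fixpoint ER_sort (l : list ER) : list ER :=
  match l with
  | [] => []
  | x :: l' => ER_insert x (ER_sort l')
  end.

Definition mid5 (a b c d e : ER) : ER := nth 2 (ER_sort [a; b; c; d; e]) NInf.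

Definition ER_to_R (x : ER) : R := match x with Fin r => r | _ => 0 end.

Definition Fext (u : R) : ER :=
  if Rlt_dec u 1 then
    (if Rlt_dec (-1) u then Fin (u / sqrt (1 - u ^ 2)) else NInf)
  else PInf.

Definition sof (r : R) : R := r / sqrt (1 + r ^ 2).

Definition g_plus (k0 r0 x : R) : ER := Fext (k0 * x + sof r0).
Definition g_minus (k0 r0 x : R) : ER := Fext (- k0 * x + sof r0).
Definition h_plus (k0 rb c x : R) : ER := Fext (- k0 * (x - c) + sof rb).
Definition h_minus (k0 rb c x : R) : ER := Fext (k0 * (x - c) + sof rb).

Definition meet_value (g h : R -> ER) (dflt : ER) : ER :=
  match excluded_middle_informative
          (exists v : R, exists x : R, g x = Fin v /\ h x = Fin v) with
  | left H => Fin (proj1_sig (constructive_indefinite_description _ H))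
  | right _ => dflt
  end.

Definition lam_plus (k0 r0 rb c : R) : ER :=
  meet_value (g_plus k0 r0) (h_plus k0 rb c) PInf.
Definition lam_minus (k0 r0 rb c : R) : ER :=
  meet_value (g_minus k0 r0) (h_minus k0 rb c) NInf.

Definition zeta (k0 r0 rb mu c x : R) : ER :=
  mid5 (h_minus k0 rb c x) (g_minus k0 r0 x) (Fin mu) (g_plus k0 r0 x) (h_plus k0 rb c x).

Definition zetaR (k0 r0 rb mu c : R) : R -> R := fun x => ER_to_R (zeta k0 r0 rb mu c x).

(* Main.v *)
Require Import Defs.
From Stdlib Require Import Reals Lra List ClassicalEpsilon.
From Coquelicot Require Import Coquelicot.
Import ListNotations.
Open Scope R_scope.

Definition emb (x : ER) : R :=
  match x with Fin r => r / (1 + Rabs r) | PInf => 1 | NInf => -1 end.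

Lemma emb_fin_bounds r : -1 < r / (1 + Rabs r) < 1.
Proof.
  assert (H : 0 < 1 + Rabs r) by (pose proof (Rabs_pos r); lra).
  split.
  - apply Rmult_lt_reg_r with (1 + Rabs r); auto.
    unfold Rdiv; rewrite Rmult_assoc, Rinv_l by lra.
    unfold Rabs; destruct Rcase_abs; lra.
  - apply Rmult_lt_reg_r with (1 + Rabs r); auto.
    unfold Rdiv; rewrite Rmult_assoc, Rinv_l by lra.
    unfold Rabs; destruct Rcase_abs; lra.
Qed.

Lemma emb_fin_le r s : r <= s -> r / (1 + Rabs r) <= s / (1 + Rabs s).
Proof.
  intros Hrs.
  assert (H1 : 0 < 1 + Rabs r) by (pose proof (Rabs_pos r); lra).
  assert (H2 : 0 < 1 + Rabs s) by (pose proof (Rabs_pos s); lra).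
  assert (E : s / (1 + Rabs s) - r / (1 + Rabs r) = (s * (1 + Rabs r) - r * (1 + Rabs s)) / ((1 + Rabs r) * (1 + Rabs s))) by (field; lra).
  assert (0 <= (s * (1 + Rabs r) - r * (1 + Rabs s)) / ((1 + Rabs r) * (1 + Rabs s))).
  { unfold Rdiv; apply Rmult_le_pos. 2: (left; apply Rinv_0_lt_compat; nra).
    unfold Rabs; destruct (Rcase_abs r), (Rcase_abs s); nra. }
  lra.
Qed.

Lemma emb_fin_lt r s : r < s -> r / (1 + Rabs r) < s / (1 + Rabs s).
Proof.
  intros Hrs.
  assert (H1 : 0 < 1 + Rabs r) by (pose proof (Rabs_pos r); lra).
  assert (H2 : 0 < 1 + Rabs s) by (pose proof (Rabs_pos s); lra).
  assert (E : s / (1 + Rabs s) - r / (1 + Rabs r) = (s * (1 + Rabs r) - r * (1 + Rabs s)) / ((1 + Rabs r) * (1 + Rabs s))) by (field; lra).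
  assert (0 < (s * (1 + Rabs r) - r * (1 + Rabs s)) / ((1 + Rabs r) * (1 + Rabs s))).
  { apply Rdiv_lt_0_compat. 2: nra.
    unfold Rabs; destruct (Rcase_abs r), (Rcase_abs s); nra. }
  lra.
Qed.

Lemma leb_emb x y : ER_leb x y = true -> emb x <= emb y.
Proof.
  destruct x as [r| |], y as [s| |]; simpl; intros H; try discriminate;
  try pose proof (emb_fin_bounds r); try pose proof (emb_fin_bounds s); try lra.
  destruct (Rle_dec r s); try discriminate. now apply emb_fin_le.
Qed.

Lemma leb_emb_f x y : ER_leb x y = false -> emb y < emb x.
Proof.
  destruct x as [r| |], y as [s| |]; simpl; intros H; try discriminate;
  try pose proof (emb_fin_bounds r); try pose proof (emb_fin_bounds s); try lra.
  destruct (Rle_dec r s); try discriminate. apply emb_fin_lt; lra.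
Qed.

Lemma emb_inj x y : emb x <= emb y -> emb y <= emb x -> x = y.
Proof.
  destruct x as [r| |], y as [s| |]; simpl; intros H H'; 
  try pose proof (emb_fin_bounds r); try pose proof (emb_fin_bounds s); try lra; auto.
  destruct (Rtotal_order r s) as [h|[h|h]].
  - pose proof (emb_fin_lt _ _ h); lra.
  - now subst.
  - pose proof (emb_fin_lt _ _ h); lra.
Qed.

Lemma emb_leb x y : emb x <= emb y -> ER_leb x y = true.
Proof.
  intros H. destruct (ER_leb x y) eqn:E; auto. apply leb_emb_f in E; lra.
Qed.

Definition ER_max (x y : ER) := if ER_leb x y then y else x.
Definition ER_min (x y : ER) := if ER_leb x y then x else y.

Lemma mid5_clamp a b c d e :
  ER_leb a d = true -> ER_leb a e = true -> ER_leb b d = true -> ER_leb b e = true ->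
  mid5 a b c d e = ER_max (ER_max a b) (ER_min c (ER_min d e)).
Proof.
  intros Had Hae Hbd Hbe.
  apply leb_emb in Had, Hae, Hbd, Hbe.
  unfold mid5, ER_max, ER_min; simpl.
  repeat (match goal with |- context [ER_leb ?x ?y] =>
     lazymatch x with context [ER_leb] => fail | _ =>
     lazymatch y with context [ER_leb] => fail | _ =>
     destruct (ER_leb x y) eqn:? end end end; simpl);
  repeat match goal with
         | H : ER_leb _ _ = true |- _ => apply leb_emb in H
         | H : ER_leb _ _ = false |- _ => apply leb_emb_f in H end;
  try reflexivity; apply emb_inj; lra.
Qed.

Definition Fr (u : R) : R := u / sqrt (1 - u ^ 2).

Lemma Fr_lt u v : -1 < u -> u < v -> v < 1 -> Fr u < Fr v.
Proof.
  intros H1 H2 H3. unfold Fr.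
  assert (Pu : 0 < 1 - u^2) by nra. assert (Pv : 0 < 1 - v^2) by nra.
  pose proof (sqrt_lt_R0 _ Pu) as Su. pose proof (sqrt_lt_R0 _ Pv) as Sv.
  pose proof (sqrt_sqrt _ (Rlt_le _ _ Pu)) as Eu.
  pose proof (sqrt_sqrt _ (Rlt_le _ _ Pv)) as Ev.
  set (su := sqrt (1 - u^2)) in *. set (sv := sqrt (1 - v^2)) in *.
  assert (u * sv < v * su).
  { destruct (Rle_or_lt 0 u).
    - assert (sv < su) by nra. nra.
    - destruct (Rle_or_lt v 0).
      + assert (su < sv) by nra. nra.
      + nra. }
  apply Rmult_lt_reg_r with (su * sv). nra.
  replace (u / su * (su * sv)) with (u * sv) by (field; lra).
  replace (v / sv * (su * sv)) with (v * su) by (field; lra).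
  lra.
Qed.

Lemma Fr_le u v : -1 < u -> u <= v -> v < 1 -> Fr u <= Fr v.
Proof. intros. destruct H0. left; apply Fr_lt; lra. subst; lra. Qed.

Lemma Fr_le_inv u v : -1 < u < 1 -> -1 < v < 1 -> Fr u <= Fr v -> u <= v.
Proof. intros. destruct (Rle_or_lt u v); auto. pose proof (Fr_lt v u); lra. Qed.

Lemma Fr_inj u v : -1 < u < 1 -> -1 < v < 1 -> Fr u = Fr v -> u = v.
Proof. intros. apply Rle_antisym; apply Fr_le_inv; lra. Qed.

Lemma Fext_in u : -1 < u < 1 -> Fext u = Fin (Fr u).
Proof. intros. unfold Fext. destruct Rlt_dec; try lra. destruct Rlt_dec; try lra. reflexivity. Qed.

Lemma Fext_fin u v : Fext u = Fin v -> -1 < u < 1 /\ v = Fr u.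
Proof. unfold Fext. destruct Rlt_dec; try discriminate. destruct Rlt_dec; try discriminate.
  intros H; inversion H; split; [lra|reflexivity]. Qed.

Lemma ER_le_fin a b : ER_le (Fin a) (Fin b) <-> a <= b.
Proof. unfold ER_le; simpl. destruct Rle_dec; split; intros; auto; try discriminate; contradiction. Qed.

Lemma Fext_mono u v : u <= v -> ER_leb (Fext u) (Fext v) = true.
Proof.
  intros H. unfold Fext.
  destruct (Rlt_dec u 1), (Rlt_dec v 1); try lra; simpl; auto;
  destruct (Rlt_dec (-1) u), (Rlt_dec (-1) v); simpl; auto; try lra.
  destruct Rle_dec; auto. exfalso; apply n; apply Fr_le; lra.
Qed.

Lemma Fext_max u v : Fext (Rmax u v) = ER_max (Fext u) (Fext v).
Proof.
  unfold Rmax, ER_max. destruct Rle_dec.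
  - rewrite Fext_mono; auto.
  - destruct (ER_leb (Fext u) (Fext v)) eqn:E; auto.
    apply emb_inj; apply leb_emb; auto. apply Fext_mono; lra.
Qed.

Lemma Fext_min u v : Fext (Rmin u v) = ER_min (Fext u) (Fext v).
Proof.
  unfold Rmin, ER_min. destruct Rle_dec.
  - rewrite Fext_mono; auto.
  - destruct (ER_leb (Fext u) (Fext v)) eqn:E; auto.
    apply emb_inj; apply leb_emb; auto. apply Fext_mono; lra.
Qed.

Lemma sof_bounds r : -1 < sof r < 1.
Proof.
  unfold sof. assert (P : 0 < 1 + r^2) by nra.
  pose proof (sqrt_lt_R0 _ P) as S. pose proof (sqrt_sqrt _ (Rlt_le _ _ P)) as E.
  set (s := sqrt (1 + r^2)) in *.
  assert (Rabs r < s).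
  { apply Rsqr_incrst_0; try lra. 2: apply Rabs_pos. rewrite <- Rsqr_abs. unfold Rsqr. nra. }
  revert H. unfold Rabs; destruct Rcase_abs; intros; split;
  (apply Rmult_lt_reg_r with s; [lra|]); unfold Rdiv; rewrite Rmult_assoc, Rinv_l by lra; lra.
Qed.

Lemma Fr_sof r : Fr (sof r) = r.
Proof.
  unfold Fr, sof. assert (P : 0 < 1 + r^2) by nra.
  pose proof (sqrt_lt_R0 _ P) as S. pose proof (sqrt_sqrt _ (Rlt_le _ _ P)) as E.
  set (s := sqrt (1 + r^2)) in *.
  assert (E2 : 1 - (r / s)^2 = (s*s - r*r)/(s*s)) by (field; lra).
  rewrite E in E2. replace ((1 + r^2 - r*r)/(1+r^2)) with ((/ s)^2) in E2 by (replace (1 + r^2 - r*r) with 1 by ring; rewrite <- E; field; lra).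
  rewrite E2.
  rewrite sqrt_pow2 by (left; apply Rinv_0_lt_compat; lra). field; lra.
Qed.

Lemma lam_plus_cases k0 r0 rb c : 0 < k0 ->
  let U := (sof r0 + sof rb + k0*c)/2 in
  ((-1 < U < 1) /\ lam_plus k0 r0 rb c = Fin (Fr U)) \/
  (~(-1 < U < 1) /\ lam_plus k0 r0 rb c = PInf).
Proof.
  intros Hk U. unfold lam_plus, meet_value.
  destruct (excluded_middle_informative _) as [H|H].
  - destruct (constructive_indefinite_description _ H) as [v [x [H1 H2]]]; simpl.
    unfold g_plus, h_plus in *.
    apply Fext_fin in H1. apply Fext_fin in H2.
    destruct H1 as [B1 E1], H2 as [B2 E2].
    assert (k0 * x + sof r0 = - k0 * (x - c) + sof rb) by (apply Fr_inj; lra).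
    assert (EU : k0 * x + sof r0 = U) by (unfold U; lra).
    left. split. rewrite <- EU; lra. rewrite <- EU; congruence.
  - right. split; auto. intros HU. apply H.
    exists (Fr U), ((sof rb - sof r0 + k0 * c) / (2 * k0)).
    unfold g_plus, h_plus.
    replace (k0 * ((sof rb - sof r0 + k0 * c) / (2 * k0)) + sof r0) with U by (unfold U; field; lra).
    replace (- k0 * ((sof rb - sof r0 + k0 * c) / (2 * k0) - c) + sof rb) with U by (unfold U; field; lra).
    rewrite Fext_in; auto.
Qed.

Lemma lam_minus_cases k0 r0 rb c : 0 < k0 ->
  let L := (sof r0 + sof rb - k0*c)/2 in
  ((-1 < L < 1) /\ lam_minus k0 r0 rb c = Fin (Fr L)) \/
  (~(-1 < L < 1) /\ lam_minus k0 r0 rb c = NInf).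
Proof.
  intros Hk L. unfold lam_minus, meet_value.
  destruct (excluded_middle_informative _) as [H|H].
  - destruct (constructive_indefinite_description _ H) as [v [x [H1 H2]]]; simpl.
    unfold g_minus, h_minus in *.
    apply Fext_fin in H1. apply Fext_fin in H2.
    destruct H1 as [B1 E1], H2 as [B2 E2].
    assert (- k0 * x + sof r0 = k0 * (x - c) + sof rb) by (apply Fr_inj; lra).
    assert (EU : - k0 * x + sof r0 = L) by (unfold L; lra).
    left. split. rewrite <- EU; lra. rewrite <- EU; congruence.
  - right. split; auto. intros HU. apply H.
    exists (Fr L), ((sof r0 - sof rb + k0 * c) / (2 * k0)).
    unfold g_minus, h_minus.
    replace (- k0 * ((sof r0 - sof rb + k0 * c) / (2 * k0)) + sof r0) with L by (unfold L; field; lra).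
    replace (k0 * ((sof r0 - sof rb + k0 * c) / (2 * k0) - c) + sof rb) with L by (unfold L; field; lra).
    rewrite Fext_in; auto.
Qed.

Lemma sof_deriv y : derivable_pt_lim sof y (/ ((1 + y^2) * sqrt (1 + y^2))).
Proof.
  apply is_derive_Reals. unfold sof.
  assert (P : 0 < 1 + y^2) by nra.
  pose proof (sqrt_lt_R0 _ P) as S. pose proof (sqrt_sqrt _ (Rlt_le _ _ P)) as E.
  auto_derive; replace (y * (y * 1)) with (y^2) by ring.
  - repeat split; lra.
  - set (s := sqrt (1 + y^2)) in *. transitivity ((s*s - y^2)/(s*s*s)). field; lra. rewrite E. field; lra.
Qed.

Lemma Rpower_32 x : 0 < x -> Rpower x (3/2) = x * sqrt x.
Proof.
  intros. replace (3/2) with (1 + /2) by field.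
  rewrite Rpower_plus, Rpower_1, Rpower_sqrt; auto.
Qed.

Lemma f_bound k0 r0 rb b : 0 < k0 -> 0 < b ->
  (exists f f' : R -> R,
      (forall x, 0 <= x <= b -> derivable_pt_lim f x (f' x)) /\
      (forall x, 0 <= x <= b ->
         Rabs (f' x) <= k0 * Rpower (1 + (f x) ^ 2) (3 / 2)) /\
      f 0 = r0 /\ f b = rb) ->
  Rabs (sof rb - sof r0) <= k0 * b.
Proof.
  intros Hk Hb [f [f' [Hd [Hbd [H0 H1]]]]].
  destruct (MVT_cor2 (fun x => sof (f x)) (fun x => f' x * / ((1 + (f x)^2) * sqrt (1 + (f x)^2))) 0 b Hb)
    as [t [Ht Htr]].
  { intros x Hx. replace (f' x * / ((1 + f x ^ 2) * sqrt (1 + f x ^ 2))) with (/ ((1 + f x ^ 2) * sqrt (1 + f x ^ 2)) * f' x) by ring.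
    apply (derivable_pt_lim_comp f sof x (f' x)).
    now apply Hd. apply sof_deriv. }
  cbv beta in Ht. rewrite H0, H1 in Ht. rewrite Ht.
  assert (P : 0 < 1 + (f t)^2) by nra.
  pose proof (sqrt_lt_R0 _ P) as S.
  specialize (Hbd t ltac:(lra)). rewrite Rpower_32 in Hbd by auto.
  rewrite Rabs_mult, Rabs_mult. replace (b - 0) with b by ring. rewrite (Rabs_right b) by lra.
  rewrite (Rabs_right (/ _)) by (left; apply Rinv_0_lt_compat; nra).
  apply Rmult_le_compat_r. lra.
  apply Rmult_le_reg_r with ((1 + f t ^ 2) * sqrt (1 + f t ^ 2)). nra.
  rewrite Rmult_assoc, Rinv_l by nra. lra.
Qed.

Definition wf k0 r0 rb m c x :=
  Rmax (Rmax (k0*(x-c)+sof rb) (-k0*x+sof r0)) (Rmin m (Rmin (k0*x+sof r0) (-k0*(x-c)+sof rb))).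

Ltac crush := unfold wf, Rmax, Rmin, Rabs in *; repeat destruct Rle_dec; repeat destruct Rcase_abs; lra.

Lemma wf_bounds k0 r0 rb m c x : -1 < m < 1 -> 0 <= k0 * x -> k0 * x <= k0 * c ->
  -1 < wf k0 r0 rb m c x < 1.
Proof. intros. pose proof (sof_bounds r0). pose proof (sof_bounds rb). crush. Qed.

Lemma wf_m k0 r0 rb m c x : Rabs (sof rb - sof r0) <= k0 * c -> 0 <= k0 * x -> k0 * x <= k0 * c ->
  (wf k0 r0 rb m c x = m <-> Rabs (m - sof r0) <= k0 * x <= k0 * c - Rabs (m - sof rb)).
Proof. intros. split; intros; crush. Qed.

Lemma wf_A k0 r0 rb m b c x : Rabs (sof rb - sof r0) <= k0 * b -> k0 * b <= k0 * c ->
  0 <= k0 * x -> k0 * x <= k0 * b - Rabs (m - sof rb) ->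
  wf k0 r0 rb m c x = wf k0 r0 rb m b x.
Proof. intros. crush. Qed.

Lemma wf_C k0 r0 rb m b c x : Rabs (sof rb - sof r0) <= k0 * b -> k0 * b <= k0 * c ->
  Rabs (m - sof r0) + Rabs (m - sof rb) <= k0 * b ->
  k0 * c - Rabs (m - sof rb) <= k0 * x -> k0 * x <= k0 * c ->
  wf k0 r0 rb m c x = wf k0 r0 rb m b (x - (c - b)).
Proof. intros. crush. Qed.

Lemma zeta_eq k0 r0 rb mu c x : Rabs (sof rb - sof r0) <= k0 * c -> 0 <= k0 * x -> k0 * x <= k0 * c ->
  zeta k0 r0 rb mu c x = Fin (Fr (wf k0 r0 rb (sof mu) c x)).
Proof.
  intros Hc H1 H2. pose proof (sof_bounds mu) as Hm.
  pose proof (sof_bounds r0). pose proof (sof_bounds rb).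
  unfold zeta, h_minus, g_minus, g_plus, h_plus.
  replace (Fin mu) with (Fext (sof mu)) by (rewrite Fext_in by lra; now rewrite Fr_sof).
  rewrite mid5_clamp by (apply Fext_mono; unfold Rabs in Hc; destruct Rcase_abs; lra).
  repeat (rewrite <- Fext_max || rewrite <- Fext_min). apply Fext_in.
  apply wf_bounds; auto.
Qed.

Lemma Fr_cont u : -1 < u < 1 -> continuity_pt Fr u.
Proof.
  intros Hu. unfold Fr.
  assert (P : 0 < 1 - u^2) by nra.
  apply continuity_pt_div.
  - apply derivable_continuous_pt, derivable_pt_id.
  - apply (continuity_pt_comp (fun v => 1 - v^2) sqrt).
    + apply continuity_pt_minus. apply continuity_pt_const; intros ? ?; reflexivity.
      apply derivable_continuous_pt. apply derivable_pt_pow.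
    + apply continuity_pt_sqrt. lra.
  - pose proof (sqrt_lt_R0 _ P). lra.
Qed.

Lemma Rmax_abs a b : Rmax a b = (a + b + Rabs (a - b)) / 2.
Proof. unfold Rmax, Rabs; destruct Rle_dec; destruct Rcase_abs; lra. Qed.
Lemma Rmin_abs a b : Rmin a b = (a + b - Rabs (a - b)) / 2.
Proof. unfold Rmin, Rabs; destruct Rle_dec; destruct Rcase_abs; lra. Qed.

Lemma cont_max f g x : continuity_pt f x -> continuity_pt g x -> continuity_pt (fun y => Rmax (f y) (g y)) x.
Proof.
  intros Hf Hg.
  apply continuity_pt_locally_ext with (a := 1) (f := fun y => (f y + g y + Rabs (f y - g y)) * / 2).
  lra. { intros y _. rewrite Rmax_abs. unfold Rdiv. reflexivity. }
  apply (continuity_pt_mult _ (fun _ => /2)).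
  2: apply continuity_pt_const; intros ? ?; reflexivity.
  apply continuity_pt_plus. apply continuity_pt_plus; auto.
  apply (continuity_pt_comp (fun y => f y - g y) Rabs).
  apply continuity_pt_minus; auto. apply Rcontinuity_abs.
Qed.

Lemma cont_min f g x : continuity_pt f x -> continuity_pt g x -> continuity_pt (fun y => Rmin (f y) (g y)) x.
Proof.
  intros Hf Hg.
  apply continuity_pt_locally_ext with (a := 1) (f := fun y => (f y + g y - Rabs (f y - g y)) * / 2).
  lra. { intros y _. rewrite Rmin_abs. unfold Rdiv. reflexivity. }
  apply (continuity_pt_mult _ (fun _ => /2)).
  2: apply continuity_pt_const; intros ? ?; reflexivity.
  apply continuity_pt_minus. apply continuity_pt_plus; auto.
  apply (continuity_pt_comp (fun y => f y - g y) Rabs).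
  apply continuity_pt_minus; auto. apply Rcontinuity_abs.
Qed.

Lemma cont_aff a b x : continuity_pt (fun y => a * y + b) x.
Proof. apply derivable_continuous_pt. reg. Qed.

Lemma cont_aff2 a b c x : continuity_pt (fun y => a * (y - c) + b) x.
Proof. apply derivable_continuous_pt. reg. Qed.

Lemma wf_cont k0 r0 rb m c x : continuity_pt (wf k0 r0 rb m c) x.
Proof.
  unfold wf.
  apply cont_max. apply cont_max. apply cont_aff2. apply cont_aff.
  apply cont_min. apply continuity_pt_const; intros ? ?; reflexivity.
  apply cont_min. apply cont_aff. apply cont_aff2.
Qed.

Lemma Z_cont k0 r0 rb m c x : -1 < wf k0 r0 rb m c x < 1 -> continuity_pt (fun y => Fr (wf k0 r0 rb m c y)) x.
Proof.
  intros H. apply (continuity_pt_comp (wf k0 r0 rb m c) Fr). apply wf_cont. now apply Fr_cont.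
Qed.

Lemma kle k a x : 0 < k -> (a <= x <-> k * a <= k * x).
Proof. intros. split; intros. apply Rmult_le_compat_l; lra. apply Rmult_le_reg_l with k; auto. Qed.

Theorem lemma2p6 (k0 r0 rb b c mu : R)
  (Hk0 : 0 < k0 < 1)
  (Hf : exists f f' : R -> R,
      (forall x, 0 <= x <= b -> derivable_pt_lim f x (f' x)) /\
      (forall x, 0 <= x <= b ->
         Rabs (f' x) <= k0 * Rpower (1 + (f x) ^ 2) (3 / 2)) /\
      f 0 = r0 /\ f b = rb)
  (Hb : 0 < b) (Hbc : b <= c)
  (Hmu : ER_le (lam_minus k0 r0 rb b) (Fin mu) /\ ER_le (Fin mu) (lam_plus k0 r0 rb b)) :
  (ER_le (lam_minus k0 r0 rb c) (Fin mu) /\ ER_le (Fin mu) (lam_plus k0 r0 rb c)) /\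
  (forall x, 0 <= x <= c -> exists v : R, zeta k0 r0 rb mu c x = Fin v) /\
  (exists (pc : Riemann_integrable (zetaR k0 r0 rb mu c) 0 c)
          (pb : Riemann_integrable (zetaR k0 r0 rb mu b) 0 b),
      RiemannInt pc - RiemannInt pb = mu * (c - b)) /\
  (exists p q : R, p <= q /\ c - b <= q - p /\
      forall x, (0 <= x <= c /\ zeta k0 r0 rb mu c x = Fin mu) <-> p <= x <= q).
Proof.
  destruct Hk0 as [Hk Hk1].
  pose proof (f_bound k0 r0 rb b Hk Hb Hf) as HB.
  assert (Hkc : k0 * b <= k0 * c) by (apply Rmult_le_compat_l; lra).
  assert (HC : Rabs (sof rb - sof r0) <= k0 * c) by lra.
  pose proof (sof_bounds r0) as B0. pose proof (sof_bounds rb) as Bb.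
  pose proof (sof_bounds mu) as Bm. pose proof (Fr_sof mu) as Emu.
  set (s0 := sof r0) in *. set (sb := sof rb) in *. set (m := sof mu) in *.
  destruct Hmu as [Hmu1 Hmu2].
  assert (Mup : m <= (s0 + sb + k0 * b) / 2).
  { destruct (lam_plus_cases k0 r0 rb b Hk) as [[HU HE]|[HU HE]]; change (sof r0) with s0 in HU, HE; change (sof rb) with sb in HU, HE; rewrite HE in Hmu2.
    - apply ER_le_fin in Hmu2. apply Fr_le_inv; try lra.
    - unfold Rabs in HB; destruct Rcase_abs in HB; lra. }
  assert (Mlo : (s0 + sb - k0 * b) / 2 <= m).
  { destruct (lam_minus_cases k0 r0 rb b Hk) as [[HU HE]|[HU HE]]; change (sof r0) with s0 in HU, HE; change (sof rb) with sb in HU, HE; rewrite HE in Hmu1.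
    - apply ER_le_fin in Hmu1. apply Fr_le_inv; try lra.
    - unfold Rabs in HB; destruct Rcase_abs in HB; lra. }
  set (A0 := Rabs (m - s0)). set (Ab := Rabs (m - sb)).
  assert (HA : A0 + Ab <= k0 * b) by (unfold A0, Ab, Rabs in *; repeat destruct Rcase_abs; lra).
  assert (A0p : 0 <= A0) by apply Rabs_pos. assert (Abp : 0 <= Ab) by apply Rabs_pos.
  split; [|split; [|split]].
  -
    split.
    + destruct (lam_minus_cases k0 r0 rb c Hk) as [[HU HE]|[HU HE]]; change (sof r0) with s0 in HU, HE; change (sof rb) with sb in HU, HE; rewrite HE.
      * apply ER_le_fin. rewrite <- Emu. apply Fr_le; lra.
      * reflexivity.
    + destruct (lam_plus_cases k0 r0 rb c Hk) as [[HU HE]|[HU HE]]; change (sof r0) with s0 in HU, HE; change (sof rb) with sb in HU, HE; rewrite HE.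
      * apply ER_le_fin. rewrite <- Emu. apply Fr_le; lra.
      * unfold ER_le. simpl. reflexivity.
  - intros x Hx. eexists. apply zeta_eq; auto.
    apply Rmult_le_pos; lra. apply Rmult_le_compat_l; lra.
  - set (Zc := fun x => Fr (wf k0 r0 rb m c x)).
    set (Zb := fun x => Fr (wf k0 r0 rb m b x)).
    set (qb := b - Ab / k0). set (qc := c - Ab / k0).
    assert (Eqb : k0 * qb = k0 * b - Ab) by (unfold qb; field; lra).
    assert (Eqc : k0 * qc = k0 * c - Ab) by (unfold qc; field; lra).
    assert (Hqb : 0 <= qb <= b).
    { split; apply (kle k0); auto; lra. }
    assert (Hqbc : qc = qb + (c - b)) by (unfold qc, qb; ring).
    assert (exc : forall u v, 0 <= u -> u <= v -> v <= c -> ex_RInt Zc u v).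
    { intros u v H1 H2 H3. apply (@ex_RInt_continuous R_CompleteNormedModule). intros z Hz.
      rewrite Rmin_left, Rmax_right in Hz by lra.
      assert (P1 : 0 <= k0 * z) by (apply Rmult_le_pos; lra).
      assert (P2 : k0 * z <= k0 * c) by (apply Rmult_le_compat_l; lra).
      apply continuity_pt_filterlim. apply Z_cont. apply wf_bounds; auto. }
    assert (exb : forall u v, 0 <= u -> u <= v -> v <= b -> ex_RInt Zb u v).
    { intros u v H1 H2 H3. apply (@ex_RInt_continuous R_CompleteNormedModule). intros z Hz.
      rewrite Rmin_left, Rmax_right in Hz by lra.
      assert (P1 : 0 <= k0 * z) by (apply Rmult_le_pos; lra).
      assert (P2 : k0 * z <= k0 * b) by (apply Rmult_le_compat_l; lra).
      apply continuity_pt_filterlim. apply Z_cont. apply wf_bounds; auto. }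
    assert (extc : forall x, Rmin 0 c < x < Rmax 0 c -> Zc x = zetaR k0 r0 rb mu c x).
    { intros x Hx. rewrite Rmin_left, Rmax_right in Hx by lra.
      assert (P1 : 0 <= k0 * x) by (apply Rmult_le_pos; lra).
      assert (P2 : k0 * x <= k0 * c) by (apply Rmult_le_compat_l; lra).
      unfold zetaR. rewrite zeta_eq by auto. reflexivity. }
    assert (extb : forall x, Rmin 0 b < x < Rmax 0 b -> Zb x = zetaR k0 r0 rb mu b x).
    { intros x Hx. rewrite Rmin_left, Rmax_right in Hx by lra.
      assert (P1 : 0 <= k0 * x) by (apply Rmult_le_pos; lra).
      assert (P2 : k0 * x <= k0 * b) by (apply Rmult_le_compat_l; lra).
      unfold zetaR. rewrite zeta_eq by (auto; lra). reflexivity. }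
    assert (exzc : ex_RInt (zetaR k0 r0 rb mu c) 0 c).
    { apply (ex_RInt_ext Zc); auto. apply exc; lra. }
    assert (exzb : ex_RInt (zetaR k0 r0 rb mu b) 0 b).
    { apply (ex_RInt_ext Zb); auto. apply exb; lra. }
    exists (ex_RInt_Reals_0 _ _ _ exzc), (ex_RInt_Reals_0 _ _ _ exzb).
    rewrite <- !RInt_Reals.
    rewrite (RInt_ext (zetaR k0 r0 rb mu c) Zc 0 c) by (intros; symmetry; auto).
    rewrite (RInt_ext (zetaR k0 r0 rb mu b) Zb 0 b) by (intros; symmetry; auto).
    assert (I1 : RInt Zc 0 c = RInt Zc 0 qb + (RInt Zc qb qc + RInt Zc qc c)).
    { rewrite <- (RInt_Chasles Zc 0 qb c) by (apply exc; lra).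
      rewrite <- (RInt_Chasles Zc qb qc c) by (apply exc; lra). reflexivity. }
    assert (I2 : RInt Zb 0 b = RInt Zb 0 qb + RInt Zb qb b).
    { rewrite <- (RInt_Chasles Zb 0 qb b) by (apply exb; lra). reflexivity. }
    assert (I3 : RInt Zc 0 qb = RInt Zb 0 qb).
    { apply RInt_ext. intros x Hx. rewrite Rmin_left, Rmax_right in Hx by lra.
      assert (P1 : 0 <= k0 * x) by (apply Rmult_le_pos; lra).
      assert (P2 : k0 * x <= k0 * qb) by (apply Rmult_le_compat_l; lra).
      unfold Zc, Zb. rewrite (wf_A k0 r0 rb m b c x); auto.  all: try change (Rabs (m - sof r0)) with A0; try change (Rabs (m - sof rb)) with Ab; lra. }
    assert (I4 : RInt Zc qb qc = (c - b) * mu).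
    { rewrite (RInt_ext Zc (fun _ => mu)). rewrite RInt_const.
      rewrite Hqbc. replace (qb + (c - b) - qb) with (c - b) by ring. reflexivity.
      intros x Hx. rewrite Rmin_left, Rmax_right in Hx by lra.
      assert (P1 : k0 * qb <= k0 * x) by (apply Rmult_le_compat_l; lra).
      assert (P2 : k0 * x <= k0 * qc) by (apply Rmult_le_compat_l; lra).
      unfold Zc. rewrite <- Emu. f_equal. apply wf_m.
      exact HC. lra. lra.
      change (Rabs (m - sof r0)) with A0; change (Rabs (m - sof rb)) with Ab. lra. }
    assert (I5 : RInt Zc qc c = RInt Zb qb b).
    { pose proof (RInt_comp_lin Zb 1 (-(c-b)) qc c) as H.
      replace (1 * qc + - (c - b)) with qb in H by (rewrite Hqbc; ring).
      replace (1 * c + - (c - b)) with b in H by ring.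
      rewrite <- H by (apply exb; lra).
      apply RInt_ext. intros x Hx. rewrite Rmin_left, Rmax_right in Hx by lra.
      assert (P1 : k0 * qc <= k0 * x) by (apply Rmult_le_compat_l; lra).
      assert (P2 : k0 * x <= k0 * c) by (apply Rmult_le_compat_l; lra).
      change (scal 1 ?y) with (1 * y). rewrite Rmult_1_l. unfold Zc, Zb.
      replace (1 * x + - (c - b)) with (x - (c - b)) by ring.
      rewrite (wf_C k0 r0 rb m b c x); auto.  all: try change (Rabs (m - sof r0)) with A0; try change (Rabs (m - sof rb)) with Ab; lra. }
    rewrite I1, I2, I3, I4, I5. ring.
  - exists (A0 / k0), (c - Ab / k0).
    assert (E1 : k0 * (A0 / k0) = A0) by (field; lra).
    assert (E2 : k0 * (c - Ab / k0) = k0 * c - Ab) by (field; lra).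
    split; [|split].
    + apply (kle k0); auto. lra.
    + apply (kle k0); auto. replace (k0 * (c - Ab / k0 - A0 / k0)) with (k0 * c - Ab - A0) by (field; lra).
      replace (k0 * (c - b)) with (k0 * c - k0 * b) by ring. lra.
    + intros x. split.
      * intros [Hx Hz].
        assert (P1 : 0 <= k0 * x) by (apply Rmult_le_pos; lra).
        assert (P2 : k0 * x <= k0 * c) by (apply Rmult_le_compat_l; lra).
        rewrite zeta_eq in Hz by auto. inversion Hz as [Hz'].
        assert (Hz2 : Fr (wf k0 r0 rb m c x) = Fr m) by (rewrite Emu; exact Hz').
        assert (WB : -1 < wf k0 r0 rb m c x < 1) by (apply wf_bounds; auto).
        apply Fr_inj in Hz2; auto. clear Hz'. rename Hz2 into Hz'.
        apply wf_m in Hz'; auto.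
        change (Rabs (m - sof r0)) with A0 in Hz'. change (Rabs (m - sof rb)) with Ab in Hz'.
        split; apply (kle k0); auto; lra.
      * intros [H1 H2].
        apply (kle k0) in H1; auto. apply (kle k0) in H2; auto.
        assert (Hx : 0 <= x <= c).
        { split; apply (kle k0); auto; lra. }
        split; auto.
        assert (P1 : 0 <= k0 * x) by (apply Rmult_le_pos; lra).
        assert (P2 : k0 * x <= k0 * c) by (apply Rmult_le_compat_l; lra).
        rewrite zeta_eq by auto. fold m.
        assert (wf k0 r0 rb m c x = m) by (apply wf_m; auto; change (Rabs (m - sof r0)) with A0; change (Rabs (m - sof rb)) with Ab; lra).
        rewrite H. rewrite Emu. reflexivity.
Qed.
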